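(* For $n\ge1$, let $g(n)$ be the number of permutations of $[n]$ with all valleys even and all peaks odd that end with an ascent, and let $c(n)$, $d(n)$ be the numbers of permutations of $[n]$ in which every alternating run has length less than $3$ and the last alternating run has length $1$, respectively $2$. Then $g(n)=c(n)$ if $n$ is odd and $g(n)=d(n)$ if $n$ is even.
   Context: For $\pi=\pi_1\cdots\pi_n$: index $i\in\{2,\dots,n-1\}$ is a peak if $\pi_{i-1}<\pi_i>\pi_{i+1}$, a valley if $\pi_{i-1}>\pi_i<\pi_{i+1}$; $\pi$ ends with an ascent if $n\ge2$ and $\pi_{n-1}<\pi_n$. $i\in[n-1]$ is an alternating descent if $i$ odd and $\pi_i>\pi_{i+1}$, or $i$ even and $\pi_i<\pi_{i+1}$; an alternating run is a maximal block of consecutive entries containing no alternating descent; the last alternating run is the one containing $\pi_n$. *)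

(* Defs.v *)
(* Permutations of [n] are lists s : seq nat with
   perm_eq s (iota 1 n); entries are 1-based: pi s i = pi_i. *)
From mathcomp Require Import all_boot.
Set Implicit Arguments. Unset Strict Implicit. Unset Printing Implicit Defensive.

Definition pent (s : seq nat) (i : nat) : nat := nth 0 s i.-1.

Definition is_peak (s : seq nat) (i : nat) : bool :=
  [&& 2 <= i, i <= (size s).-1, pent s i.-1 < pent s i & pent s i.+1 < pent s i].

Definition is_valley (s : seq nat) (i : nat) : bool :=
  [&& 2 <= i, i <= (size s).-1, pent s i < pent s i.-1 & pent s i < pent s i.+1].

Definition ends_with_ascent (s : seq nat) : bool :=
  (2 <= size s) && (pent s (size s).-1 < pent s (size s)).

Definition valleys_even_peaks_odd (s : seq nat) : bool :=
  all (fun i => is_valley s i ==> ~~ odd i) (iota 1 (size s)) &&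
  all (fun i => is_peak s i ==> odd i) (iota 1 (size s)).

Definition is_altdes (s : seq nat) (i : nat) : bool :=
  if odd i then pent s i.+1 < pent s i else pent s i < pent s i.+1.

Definition altdes_set (s : seq nat) : seq nat :=
  [seq i <- iota 1 (size s).-1 | is_altdes s i].

(* lengths of the alternating runs, left to right: the runs are the blocks
   [1..d1], [d1+1..d2], ..., [dk+1..n] cut after the alternating descents *)
Definition altrun_lengths (s : seq nat) : seq nat :=
  pairmap (fun a b => b - a) 0 (rcons (altdes_set s) (size s)).

Definition last_altrun_length (s : seq nat) : nat := last 0 (altrun_lengths s).

Definition g_count (n : nat) : nat :=
  count (fun s => valleys_even_peaks_odd s && ends_with_ascent s)
        (permutations (iota 1 n)).

Definition c_count (n : nat) : nat :=
  count (fun s => all (fun l => l < 3) (altrun_lengths s) && (last_altrun_length s == 1))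
        (permutations (iota 1 n)).

Definition d_count (n : nat) : nat :=
  count (fun s => all (fun l => l < 3) (altrun_lengths s) && (last_altrun_length s == 2))
        (permutations (iota 1 n)).

(* Main.v *)
Require Import Defs.
From mathcomp Require Import all_boot zify.

Section G.
Variable f : nat -> bool.
Definition Gp p a k := all (fun l => l < 3) (pairmap (fun x y => y - x) p (rcons (filter f (iota a k)) (a+k))).

Lemma G_big k : forall p a, p + 3 <= a -> Gp p a k = false.
Proof.
elim: k => [|k IH] p a h; rewrite /Gp.
  rewrite addn0 /= andbT. apply/negbTE/negP => ?; lia.
rewrite /= ; case: (f a) => /=.
  have -> : (a - p < 3) = false by apply/negbTE/negP => ?; lia.
  by [].
rewrite -addSnnS; apply: IH; lia.
Qed.

Lemma G_char k : forall p a, p < a -> a <= p + 2 ->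
  Gp p a k = ((a == p + 2) ==> (0 < k) ==> f a) &&
             all (fun j => f j || f j.+1) (iota a k.-1).
Proof.
elim: k => [|k IH] p a h1 h2; rewrite /Gp.
  rewrite addn0 /= implybT /= andbT. apply/idP; lia.
rewrite /= -addSnnS; case fa: (f a) => /=.
  have -> : a - p < 3 by lia.
  rewrite -/(Gp a a.+1 k) IH; try lia.
  have -> : (a.+1 == a + 2) = false by apply/negbTE/negP => /eqP; lia.
  rewrite implybT /=.
  by case: k {IH} => //= k; rewrite fa.
case: (eqVneq a (p+2)) => ea /=.
  by rewrite -/(Gp p a.+1 k) G_big //; lia.
rewrite -/(Gp p a.+1 k) IH; try lia.
have -> : (a.+1 == p + 2) by apply/eqP; lia.
by case: k {IH} => //= k; rewrite fa.
Qed.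
End G.

Lemma point s i : uniq s -> 2 <= i -> i <= (size s).-1 ->
  ((is_valley s i ==> ~~ odd i) && (is_peak s i ==> odd i)) =
  (is_altdes s i.-1 || is_altdes s i).
Proof.
move=> u.
case: i => [|[|j]] // _ hi.
have dxy : pent s j.+1 != pent s j.+2.
  by rewrite /pent /= nth_uniq //; lia.
have dyz : pent s j.+2 != pent s j.+3.
  by rewrite /pent /= nth_uniq //; lia.
rewrite /is_valley /is_peak /is_altdes hi /=.
move: dxy dyz.
case: (odd j) => /=;
case: (ltngtP (pent s j.+1) (pent s j.+2)) => //;
case: (ltngtP (pent s j.+2) (pent s j.+3)) => //.
Qed.
Ltac L := repeat match goal with H : context[predn ?x] |- _ => rewrite -subn1 in H | |- context[predn ?x] => rewrite -subn1 end; lia.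

Lemma VP s : uniq s ->
  valleys_even_peaks_odd s = all (fun j => is_altdes s j || is_altdes s j.+1) (iota 1 (size s).-2).
Proof.
move=> u; rewrite /valleys_even_peaks_odd -all_predI.
apply/allP/allP => /= H j; rewrite mem_iota => /andP hj; set n := size s in hj H *.
  have hj' : j.+1 \in iota 1 (size s) by rewrite mem_iota; apply/andP; split; L.
  move: (H _ hj'); rewrite point //=; rewrite -/n; L.
case: (boolP ((2 <= j) && (j <= (size s).-1))) => [/andP [h1 h2]|hn].
  rewrite point //; try (rewrite -/n; L).
  have e : j.-1.+1 = j by L.
  have := H j.-1; rewrite e; apply; rewrite mem_iota; apply/andP; split; L.
have -> : is_valley s j = false.
  by rewrite /is_valley; apply/negbTE/negP => /and4P [? ? _ _]; move/negP: hn; apply; apply/andP.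
have -> : is_peak s j = false.
  by rewrite /is_peak; apply/negbTE/negP => /and4P [? ? _ _]; move/negP: hn; apply; apply/andP.
by [].
Qed.

Lemma AR s : 2 <= size s ->
  all (fun l => l < 3) (altrun_lengths s) = all (fun j => is_altdes s j || is_altdes s j.+1) (iota 1 (size s).-2).
Proof.
move=> h; rewrite /altrun_lengths /altdes_set.
case E: (size s) h => [|m] // _.
have -> : m.+1 = 1 + m by [].
rewrite -/(Gp (is_altdes s) 0 1 m) G_char //=.
Qed.

Lemma LL s : last_altrun_length s = size s - last 0 (altdes_set s).
Proof. by rewrite /last_altrun_length /altrun_lengths -cats1 pairmap_cat last_cat. Qed.

Lemma LF (f : nat -> bool) m : f m.+1 -> last 0 (filter f (iota 1 m.+1)) = m.+1.
Proof. move=> h; rewrite -(addn1 m) iotaD filter_cat /= add1n h last_cat /=; lia. Qed.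

Lemma LF2 (f : nat -> bool) m : ~~ f m.+2 -> f m.+1 -> last 0 (filter f (iota 1 m.+2)) = m.+1.
Proof. move=> h h'; rewrite -(addn1 m.+1) iotaD filter_cat /= add1n (negbTE h) cats0. exact: LF. Qed.

Lemma LF0 (f : nat -> bool) : ~~ f 1 -> last 0 (filter f (iota 1 1)) = 0.
Proof. by move=> /= /negbTE ->. Qed.

Lemma last_le (f : nat -> bool) m : last 0 (filter f (iota 1 m)) <= m.
Proof.
have := mem_last 0 (filter f (iota 1 m)); rewrite inE => /orP [/eqP -> //|].
by rewrite mem_filter mem_iota => /and3P [_ _]; rewrite add1n ltnS.
Qed.

Lemma LFn (f : nat -> bool) m : ~~ f m.+1 -> last 0 (filter f (iota 1 m.+1)) = last 0 (filter f (iota 1 m)).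
Proof. move=> h; by rewrite -(addn1 m) iotaD filter_cat /= add1n (negbTE h) cats0. Qed.

Lemma key s m : uniq s -> size s = m.+2 ->
  (valleys_even_peaks_odd s && ends_with_ascent s) =
  (if odd m then all (fun l => l < 3) (altrun_lengths s) && (last_altrun_length s == 1)
   else all (fun l => l < 3) (altrun_lengths s) && (last_altrun_length s == 2)).
Proof.
move=> u hs.
have d : pent s m.+1 != pent s m.+2 by rewrite /pent /= nth_uniq //; lia.
rewrite VP // AR ?hs // LL /altdes_set hs /ends_with_ascent hs !succnK.
have -> : 2 <= m.+2 by [].
rewrite andTb.
have hf : is_altdes s m.+1 = if odd m then pent s m.+1 < pent s m.+2 else pent s m.+2 < pent s m.+1.
  by rewrite /is_altdes /=; case: (odd m).
set N := all _ _.
case om: (odd m) in hf *.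
  case fm: (is_altdes s m.+1).
    rewrite LF // subSnn andbT.
    by rewrite -hf fm andbT.
  rewrite LFn ?fm //.
  have -> : (pent s m.+1 < pent s m.+2) = false by rewrite -hf fm.
  rewrite andbF; apply/esym/negbTE; rewrite negb_and; apply/orP; right.
  set x := last 0 _.
  have : x <= m by apply: last_le.
  move=> h; apply/negP => /eqP; lia.
case fm: (is_altdes s m.+1).
  rewrite LF // subSnn andbF.
  have -> : (pent s m.+1 < pent s m.+2) = false.
    move: fm; rewrite hf => h; apply/negbTE; rewrite -leqNgt; exact: ltnW.
  by rewrite andbF.
rewrite LFn ?fm //.
have -> : (pent s m.+1 < pent s m.+2).
  move: fm d; rewrite hf; case: ltngtP => //.
rewrite andbT.
rewrite /N; clear N.
case: m om hs hf fm d => [|m] om hs hf fm d.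
  by [].
apply/idP/idP => [hN|/andP [//]].
apply/andP; split => //.
have fm1 : is_altdes s m.+1.
  move: hN => /allP /(_ m.+1); rewrite mem_iota fm orbF; apply; lia.
by rewrite LF //; apply/eqP; lia.
Qed.

Theorem mainTheorem16 (n : nat) (hn : 2 <= n) :
  g_count n = (if odd n then c_count n else d_count n).
Proof.
case: n hn => [|[|m]] // _.
rewrite /g_count /c_count /d_count /=.
have H : forall s, s \in permutations (iota 1 m.+2) -> uniq s /\ size s = m.+2.
  move=> s; rewrite mem_permutations => p.
  by rewrite (perm_uniq p) (perm_size p) iota_uniq size_iota.
case om: (odd m); apply: eq_in_count => s /H [u hs];
  by rewrite (@key s m u hs) om.
Qed.
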